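(* For complex numbers $z,w$ with $|z|<1$, $|w|<\frac14$ and $w(1+z)^2\neq z$, $$P(z,w):=\sum_{n\ge0}P_n(z)w^n=\frac{C(w)-(z+1)}{w(1+z)^2-z},$$ $$Q(z,w):=\sum_{n\ge0}Q_n(z)w^n=\frac{(C(w)-(z+1))(z+1)}{w(1+z)^2-z}=P(z,w)(z+1).$$
   Context: $C_n=\frac{1}{n+1}\binom{2n}{n}$ are the Catalan numbers and $C(w)=\sum_{n\ge0}C_nw^n=\frac{1-\sqrt{1-4w}}{2w}$ for $|w|<\frac14$. The Catalan triangle numbers are $B_{n,k}=\frac{k}{n}\binom{2n}{n-k}$ ($n\ge1$, $1\le k\le n$) and $A_{n,k}=\frac{2k-1}{2n+1}\binom{2n+1}{n+1-k}$ ($n\ge0$, $1\le k\le n+1$). For $n\ge0$, $P_n(z)=\sum_{j=0}^n B_{n+1,j+1}z^j$ and $Q_n(z)=\sum_{j=0}^{n+1}A_{n+1,j+1}z^j$. *)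

(* Defs.v *)
From Stdlib Require Import Reals.
From Coquelicot Require Import Coquelicot.
Open Scope R_scope.

Fixpoint binom (n k : nat) : nat :=
  match n, k with
  | _, O => 1%nat
  | O, S _ => 0%nat
  | S n', S k' => (binom n' k' + binom n' (S k'))%nat
  end.

Definition catalan (n : nat) : R := INR (binom (2 * n) n) / INR (S n).

Definition catGF (w : C) : C :=
  @iota (CompleteNormedModule.CompleteSpace _ C_CompleteNormedModule) (fun l : C => is_series (fun n => (RtoC (catalan n) * Cpow w n)%C) l).

Definition Btri (n k : nat) : R := INR k / INR n * INR (binom (2 * n) (n - k)).

Definition Atri (n k : nat) : R :=
  (2 * INR k - 1) / (2 * INR n + 1) * INR (binom (2 * n + 1) (n + 1 - k)).

Definition Ppoly (n : nat) (z : C) : C :=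
  sum_n (fun j => (RtoC (Btri (S n) (S j)) * Cpow z j)%C) n.

Definition Qpoly (n : nat) (z : C) : C :=
  sum_n (fun j => (RtoC (Atri (S n) (S j)) * Cpow z j)%C) (S n).

(* Main.v *)
Require Import Defs.
From Stdlib Require Import Reals Lia Lra Factorial.
From Coquelicot Require Import Coquelicot.
Open Scope R_scope.

Lemma binom_gt : forall n k, (n < k)%nat -> binom n k = 0%nat.
Proof.
  induction n; intros k H; destruct k; simpl; try lia; auto.
  rewrite !IHn by lia. reflexivity.
Qed.

Lemma C_nn : forall n, Binomial.C n n = 1.
Proof.
  intro n. unfold Binomial.C. rewrite Nat.sub_diag. simpl.
  field. apply INR_fact_neq_0.
Qed.

Lemma C_n0 : forall n, Binomial.C n 0 = 1.
Proof.
  intro n. unfold Binomial.C. rewrite Nat.sub_0_r. simpl.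
  field. apply INR_fact_neq_0.
Qed.

Lemma binom_C : forall n k, (k <= n)%nat -> INR (binom n k) = Binomial.C n k.
Proof.
  induction n; intros k H.
  - assert (k = 0%nat) by lia. subst. simpl. rewrite C_n0. reflexivity.
  - destruct k.
    + simpl. rewrite C_n0. reflexivity.
    + simpl. rewrite plus_INR.
      destruct (Nat.eq_dec k n).
      * subst. rewrite (binom_gt n (S n)) by lia. rewrite (IHn n) by lia. rewrite !C_nn. simpl. lra.
      * rewrite (IHn k) by lia. rewrite (IHn (S k)) by lia. apply pascal. lia.
Qed.

Lemma binom_le_pow : forall n k, (binom n k <= 2 ^ n)%nat.
Proof.
  induction n; intros k; destruct k; simpl; try lia.
  - pose proof (Nat.pow_nonzero 2 n). lia.
  - pose proof (IHn k). pose proof (IHn (S k)). lia.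
Qed.

Lemma fact1 : forall x y, x = S y -> INR (fact x) = INR (S y) * INR (fact y).
Proof. intros; subst; rewrite fact_simpl, mult_INR; reflexivity. Qed.

Lemma fact2 : forall x y, x = S (S y) ->
  INR (fact x) = INR (S (S y)) * INR (S y) * INR (fact y).
Proof. intros; subst. rewrite (fact1 _ (S y)) by reflexivity.
  rewrite (fact1 (S y) y) by reflexivity. ring. Qed.

Lemma Bf : forall a k, Btri (a + k) k =
  INR k / INR (a + k) * (INR (fact (2*a+2*k)) / (INR (fact a) * INR (fact (a+2*k)))).
Proof.
  intros. unfold Btri.
  replace (2 * (a + k))%nat with (2*a+2*k)%nat by lia.
  replace (a + k - k)%nat with a by lia.
  rewrite binom_C by lia. unfold Binomial.C.
  replace (2*a+2*k - a)%nat with (a+2*k)%nat by lia. reflexivity.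
Qed.

Lemma Af : forall a k, Atri (a + k) k =
  (2 * INR k - 1) / (2 * INR (a + k) + 1) *
  (INR (fact (2*a+2*k+1)) / (INR (fact (S a)) * INR (fact (a+2*k)))).
Proof.
  intros. unfold Atri.
  replace (2 * (a + k) + 1)%nat with (2*a+2*k+1)%nat by lia.
  replace (a + k + 1 - k)%nat with (S a) by lia.
  rewrite binom_C by lia. unfold Binomial.C.
  replace (2*a+2*k+1 - S a)%nat with (a+2*k)%nat by lia. reflexivity.
Qed.

Lemma Btri_0 : forall n, Btri n 0 = 0.
Proof. intros. unfold Btri. simpl. unfold Rdiv. ring. Qed.

Lemma Btri_nn : forall n, Btri (S n) (S n) = 1.
Proof. intros. unfold Btri. rewrite Nat.sub_diag. simpl binom. simpl INR at 3.
  field. apply not_0_INR. lia. Qed.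

Ltac posn := repeat match goal with
  | [ x : nat |- _ ] => match goal with [ H : 0 <= INR x |- _ ] => fail 1 | _ => pose proof (pos_INR x) end
  end.

Lemma B_rec_gen : forall a i,
  Btri (S (S a) + S i) (S i) =
  Btri (a + S (S i)) (S (S i)) + 2 * Btri (S a + S i) (S i) + Btri (S (S a) + i) i.
Proof.
  intros. rewrite !Bf.
  rewrite (fact2 (2 * S (S a) + 2 * S i) (2*a+2*i+4)) by lia.
  rewrite (fact2 (S (S a) + 2 * S i) (a+2*i+2)) by lia.
  rewrite (fact2 (S (S a)) a) by lia.
  replace (2 * a + 2 * S (S i))%nat with (2*a+2*i+4)%nat by lia.
  rewrite (fact2 (a + 2 * S (S i)) (a+2*i+2)) by lia.
  replace (2 * S a + 2 * S i)%nat with (2*a+2*i+4)%nat by lia.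
  rewrite (fact1 (S a) a) by lia.
  rewrite (fact1 (S a + 2 * S i) (a+2*i+2)) by lia.
  replace (2 * S (S a) + 2 * i)%nat with (2*a+2*i+4)%nat by lia.
  replace (S (S a) + 2 * i)%nat with (a+2*i+2)%nat by lia.
  pose proof (INR_fact_lt_0 (2*a+2*i+4)). pose proof (INR_fact_lt_0 (a+2*i+2)).
  pose proof (INR_fact_lt_0 a).
  set (Y := INR (fact (2*a+2*i+4))) in *. set (V := INR (fact (a+2*i+2))) in *.
  set (U := INR (fact a)) in *.
  rewrite ?S_INR, ?plus_INR, ?mult_INR, ?S_INR. simpl INR.
  posn.
  field; repeat split; lra.
Qed.
Lemma B_rec_top : forall i,
  Btri (S (S i)) (S i) = 2 * Btri (S i) (S i) + Btri (S i) i.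
Proof.
  intros. rewrite Btri_nn.
  replace (S (S i)) with (1 + S i)%nat by lia.
  replace (S i) with (1 + i)%nat at 3 by lia.
  rewrite !Bf.
  rewrite (fact2 (2 * 1 + 2 * S i) (2*i+2)) by lia.
  replace (1 + 2 * S i)%nat with (S (S (S (2*i)))) by lia.
  rewrite (fact2 (S (S (S (2*i)))) (S (2*i))) by lia.
  replace (2 * 1 + 2 * i)%nat with (2*i+2)%nat by lia.
  replace (1 + 2 * i)%nat with (S (2*i)) by lia.
  rewrite (fact1 (2*i+2) (S (2*i))) by lia.
  pose proof (INR_fact_lt_0 (S (2*i))).
  set (V := INR (fact (S (2*i)))) in *.
  rewrite ?S_INR, ?plus_INR, ?mult_INR, ?S_INR. simpl INR.
  posn.
  field; repeat split; lra.
Qed.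

Lemma B_cat : forall m, Btri (S m) 1 = catalan (S m).
Proof.
  intros. unfold catalan.
  replace (S m) with (m + 1)%nat at 1 by lia. rewrite Bf.
  rewrite binom_C by lia. unfold Binomial.C.
  replace (2 * S m - S m)%nat with (S m) by lia.
  replace (2 * S m)%nat with (2*m+2*1)%nat by lia.
  replace (m + 2 * 1)%nat with (S (S m)) by lia.
  rewrite (fact1 (S (S m)) (S m)) by lia.
  rewrite (fact1 (S m) m) by lia.
  pose proof (INR_fact_lt_0 (2*m+2*1)). pose proof (INR_fact_lt_0 m).
  set (Y := INR (fact (2*m+2*1))) in *. set (V := INR (fact m)) in *.
  rewrite ?S_INR, ?plus_INR, ?mult_INR, ?S_INR. simpl INR.
  posn.
  field; repeat split; lra.
Qed.

Lemma A_rel : forall a j,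
  Atri (a + S j) (S j) = Btri (a + S j) (S j) + Btri (S a + j) j.
Proof.
  intros. rewrite Af, !Bf.
  replace (2 * a + 2 * S j + 1)%nat with (S (2*a+2*j+2)) by lia.
  rewrite (fact1 (S (2*a+2*j+2)) (2*a+2*j+2)) by lia.
  replace (2 * S a + 2 * j)%nat with (2*a+2*j+2)%nat by lia.
  replace (2 * a + 2 * S j)%nat with (2*a+2*j+2)%nat by lia.
  rewrite (fact1 (S a) a) by lia.
  replace (a + 2 * S j)%nat with (S (a+2*j+1)) by lia.
  rewrite (fact1 (S (a+2*j+1)) (a+2*j+1)) by lia.
  replace (S a + 2 * j)%nat with (a+2*j+1)%nat by lia.
  pose proof (INR_fact_lt_0 (2*a+2*j+2)). pose proof (INR_fact_lt_0 (a+2*j+1)).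
  pose proof (INR_fact_lt_0 a).
  set (Y := INR (fact (2*a+2*j+2))) in *. set (V := INR (fact (a+2*j+1))) in *.
  set (U := INR (fact a)) in *.
  rewrite ?S_INR, ?plus_INR, ?mult_INR, ?S_INR. simpl INR.
  posn.
  field; repeat split; lra.
Qed.

Lemma A_top : forall n, Atri (S n) (S (S n)) = 1.
Proof.
  intros. unfold Atri. replace (S n + 1 - S (S n))%nat with 0%nat by lia.
  simpl binom. rewrite !S_INR. simpl INR. posn. field. lra.
Qed.

Fixpoint csum (f : nat -> C) (n : nat) : C :=
  match n with 0 => f 0%nat | S n' => (csum f n' + f (S n'))%C end.

Lemma sum_n_csum : forall (f : nat -> C) n, sum_n f n = csum f n.
Proof.
  intros f n; induction n.
  - rewrite sum_O. reflexivity.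
  - rewrite sum_Sn, IHn. reflexivity.
Qed.

Definition pe (c : nat -> R) (N : nat) (z : C) : C :=
  csum (fun j => (RtoC (c j) * Cpow z j)%C) N.

Definition shift (c : nat -> R) (j : nat) : R :=
  match j with 0 => 0 | S j' => c j' end.

Lemma pe_ext : forall c d N z, (forall j, (j <= N)%nat -> c j = d j) ->
  pe c N z = pe d N z.
Proof.
  intros c d N z H; unfold pe; induction N; simpl.
  - rewrite H by lia. reflexivity.
  - rewrite IHN by (intros; apply H; lia). rewrite (H (S N)) by lia. reflexivity.
Qed.

Lemma pe_plus : forall c d N z,
  (pe c N z + pe d N z)%C = pe (fun j => c j + d j) N z.
Proof.
  intros c d N z; unfold pe; induction N; simpl.
  - rewrite RtoC_plus. ring.
  - rewrite <- IHN. rewrite RtoC_plus. ring.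
Qed.

Lemma pe_scal : forall r c N z,
  (RtoC r * pe c N z)%C = pe (fun j => r * c j) N z.
Proof.
  intros r c N z; unfold pe; induction N; simpl.
  - rewrite RtoC_mult. ring.
  - rewrite <- IHN. rewrite RtoC_mult. ring.
Qed.

Lemma pe_ext0 : forall c N z, c (S N) = 0 -> pe c (S N) z = pe c N z.
Proof.
  intros c N z H. unfold pe. simpl. rewrite H. ring.
Qed.

Lemma pe_shift : forall c N z, (z * pe c N z)%C = pe (shift c) (S N) z.
Proof.
  intros c N z; unfold pe; induction N.
  - simpl. ring.
  - change (csum (fun j : nat => (RtoC (shift c j) * Cpow z j)%C) (S (S N)))
      with (csum (fun j : nat => (RtoC (shift c j) * Cpow z j)%C) (S N) + RtoC (c (S N)) * Cpow z (S (S N)))%C.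
    rewrite <- IHN. simpl. ring.
Qed.

Lemma pe_delta : forall c N z, (forall j, (0 < j)%nat -> c j = 0) -> pe c N z = RtoC (c 0%nat).
Proof.
  intros c N z H; induction N.
  - unfold pe; simpl. ring.
  - rewrite pe_ext0 by (apply H; lia). exact IHN.
Qed.

Lemma RtoC_m1 : RtoC (-1) = Copp (RtoC 1).
Proof. unfold RtoC, Copp. simpl. f_equal; ring. Qed.
Lemma RtoC_2 : RtoC 2 = Cplus (RtoC 1) (RtoC 1).
Proof. unfold RtoC, Cplus. simpl. f_equal; ring. Qed.

Definition pc (m : nat) (j : nat) : R := if (j <=? m)%nat then Btri (S m) (S j) else 0.
Definition qc (m : nat) (j : nat) : R := if (j <=? S m)%nat then Atri (S m) (S j) else 0.

Lemma Ppoly_pe : forall m z, Ppoly m z = pe (pc m) m z.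
Proof.
  intros. unfold Ppoly. rewrite sum_n_csum. apply pe_ext.
  intros j Hj. unfold pc. replace (j <=? m)%nat with true. reflexivity.
  symmetry. apply Nat.leb_le. exact Hj.
Qed.

Lemma Qpoly_pe : forall m z, Qpoly m z = pe (qc m) (S m) z.
Proof.
  intros. unfold Qpoly. rewrite sum_n_csum.
  change (pe (fun j => Atri (S m) (S j)) (S m) z = pe (qc m) (S m) z). apply pe_ext.
  intros j Hj. unfold qc. replace (j <=? S m)%nat with true. reflexivity.
  symmetry. apply Nat.leb_le. exact Hj.
Qed.

Lemma pc_true : forall m j, (j <= m)%nat -> pc m j = Btri (S m) (S j).
Proof. intros. unfold pc. replace (j <=? m)%nat with true. reflexivity.
  symmetry. apply Nat.leb_le. lia. Qed.
Lemma pc_false : forall m j, (m < j)%nat -> pc m j = 0.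
Proof. intros. unfold pc. replace (j <=? m)%nat with false. reflexivity.
  symmetry. apply Nat.leb_gt. lia. Qed.
Lemma qc_true : forall m j, (j <= S m)%nat -> qc m j = Atri (S m) (S j).
Proof. intros. unfold qc. replace (j <=? S m)%nat with true. reflexivity.
  symmetry. apply Nat.leb_le. lia. Qed.

Lemma shift_pc : forall m i, (i <= S m)%nat -> shift (pc m) i = Btri (S m) i.
Proof. intros m i H. destruct i; simpl. rewrite Btri_0; reflexivity.
  apply pc_true. lia. Qed.

Lemma B_rec_gen' : forall m i, (S i <= m)%nat ->
  Btri (S (S m)) (S i) = Btri (S m) (S (S i)) + 2 * Btri (S m) (S i) + Btri (S m) i.
Proof.
  intros m i H. pose proof (B_rec_gen (m - S i) i) as E.
  replace (S (S (m - S i)) + S i)%nat with (S (S m)) in E by lia.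
  replace (m - S i + S (S i))%nat with (S m) in E by lia.
  replace (S (m - S i) + S i)%nat with (S m) in E by lia.
  replace (S (S (m - S i)) + i)%nat with (S m) in E by lia.
  exact E.
Qed.

Lemma P_rec : forall m z,
  (z * Ppoly (S m) z = (1 + z) ^ 2 * Ppoly m z - RtoC (catalan (S m)))%C.
Proof.
  intros m z. rewrite !Ppoly_pe.
  replace ((1 + z) ^ 2 * pe (pc m) m z - RtoC (catalan (S m)))%C with
    (pe (pc m) m z + z * (RtoC 2 * pe (pc m) m z) + z * (z * pe (pc m) m z)
     + RtoC (-1) * pe (fun j => if (j =? 0)%nat then catalan (S m) else 0) (S (S m)) z)%C.
  2:{ rewrite (pe_delta (fun j => if (j =? 0)%nat then catalan (S m) else 0)).
      simpl. rewrite RtoC_m1, RtoC_2. ring. intros j Hj. destruct j; [lia|reflexivity]. }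
  rewrite (pe_scal (-1)), (pe_scal 2).
  rewrite (pe_shift (pc (S m)) (S m)), (pe_shift (pc m) m), (pe_shift (shift (pc m)) (S m)).
  rewrite (pe_shift (fun j => 2 * pc m j) m).
  rewrite <- (pe_ext0 (pc m) m) by (apply pc_false; lia).
  rewrite <- (pe_ext0 (pc m) (S m)) by (apply pc_false; lia).
  rewrite <- (pe_ext0 (shift (fun j => 2 * pc m j)) (S m)) by (simpl; rewrite pc_false by lia; ring).
  rewrite !pe_plus.
  apply pe_ext. intros j Hj. destruct j as [|i].
  - simpl. rewrite pc_true by lia. rewrite B_cat. ring.
  - simpl shift. simpl Nat.eqb.
    rewrite pc_true by lia. rewrite shift_pc by lia.
    destruct (Nat.le_gt_cases (S i) m).
    + rewrite (pc_true m i) by lia. rewrite (pc_true m (S i)) by lia.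
      rewrite B_rec_gen' by lia. ring.
    + destruct (Nat.eq_dec i m).
      * subst i. rewrite (pc_true m m) by lia. rewrite (pc_false m (S m)) by lia.
        rewrite B_rec_top. ring.
      * assert (i = S m) by lia. subst i. rewrite (pc_false m (S (S m))) by lia.
        rewrite (pc_false m (S m)) by lia.
        rewrite !Btri_nn. ring.
Qed.

Lemma Q_rel : forall m z, Qpoly m z = ((1 + z) * Ppoly m z)%C.
Proof.
  intros m z. rewrite Qpoly_pe, Ppoly_pe.
  replace ((1 + z) * pe (pc m) m z)%C with (pe (pc m) m z + z * pe (pc m) m z)%C by ring.
  rewrite pe_shift.
  rewrite <- (pe_ext0 (pc m) m) by (apply pc_false; lia).
  rewrite pe_plus. apply pe_ext. intros j Hj.
  rewrite qc_true by lia. rewrite shift_pc by lia.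
  destruct (Nat.le_gt_cases j m).
  - rewrite pc_true by lia. pose proof (A_rel (m - j) j) as E.
    replace (m - j + S j)%nat with (S m) in E by lia.
    replace (S (m - j) + j)%nat with (S m) in E by lia. exact E.
  - assert (j = S m) by lia. subst. rewrite pc_false by lia.
    rewrite A_top, Btri_nn. ring.
Qed.

Lemma Cmod_csum : forall f N, Cmod (csum f N) <= sum_f_R0 (fun j => Cmod (f j)) N.
Proof.
  intros f N; induction N; simpl.
  - lra.
  - eapply Rle_trans. apply Cmod_triangle. lra.
Qed.

Lemma geom_bound : forall r N, 0 <= r < 1 -> sum_f_R0 (fun j => r ^ j) N <= / (1 - r).
Proof.
  intros r N Hr. rewrite tech3 by lra.
  pose proof (pow_le r (S N) (proj1 Hr)).
  unfold Rdiv. rewrite <- (Rmult_1_l (/ (1 - r))) at 2. apply Rmult_le_compat_r.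
  - left. apply Rinv_0_lt_compat. lra.
  - lra.
Qed.

Lemma pow4 : forall n, INR (2 ^ (2 * n)) = 4 ^ n.
Proof.
  intros. rewrite pow_INR, pow_mult. simpl INR. f_equal. ring.
Qed.

Lemma Btri_bound : forall n j, (j <= n)%nat ->
  0 <= Btri (S n) (S j) <= 4 ^ (S n).
Proof.
  intros n j H. unfold Btri.
  pose proof (binom_le_pow (2 * S n) (S n - S j)) as Hb.
  apply le_INR in Hb. rewrite pow4 in Hb.
  pose proof (pos_INR (binom (2 * S n) (S n - S j))).
  assert (Hn : 0 < INR (S n)) by (apply lt_0_INR; lia).
  assert (Hjn : INR (S j) <= INR (S n)) by (apply le_INR; lia).
  pose proof (pos_INR (S j)).
  assert (0 <= INR (S j) / INR (S n) <= 1).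
  { split. apply Rdiv_le_0_compat; lra. apply (proj1 (Rdiv_le_1 _ _ Hn)); lra. }
  split. apply Rmult_le_pos; lra.
  replace (4 ^ S n) with (1 * 4 ^ S n) by ring.
  apply Rmult_le_compat; lra.
Qed.

Lemma Ppoly_bound : forall n z, Cmod z < 1 ->
  Cmod (Ppoly n z) <= 4 ^ (S n) / (1 - Cmod z).
Proof.
  intros n z Hz. unfold Ppoly. rewrite sum_n_csum.
  eapply Rle_trans. apply Cmod_csum.
  eapply Rle_trans.
  apply (sum_Rle _ (fun j => Cmod z ^ j * 4 ^ S n)).
  - intros j Hj. rewrite Cmod_mult, Cmod_R, Cmod_pow.
    pose proof (Btri_bound n j Hj). rewrite Rabs_pos_eq by lra.
    rewrite Rmult_comm. apply Rmult_le_compat_l. apply pow_le, Cmod_ge_0. lra.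
  - rewrite <- scal_sum. unfold Rdiv.
    apply Rmult_le_compat_l. apply pow_le; lra.
    apply geom_bound. pose proof (Cmod_ge_0 z). lra.
Qed.

Lemma catalan_bound : forall n, 0 <= catalan n <= 4 ^ n.
Proof.
  intros n. unfold catalan.
  pose proof (binom_le_pow (2 * n) n) as Hb.
  apply le_INR in Hb. rewrite pow4 in Hb.
  pose proof (pos_INR (binom (2 * n) n)).
  assert (1 <= INR (S n)) by (rewrite S_INR; pose proof (pos_INR n); lra).
  split. apply Rdiv_le_0_compat; lra.
  unfold Rdiv. replace (4 ^ n) with (4 ^ n * 1) by ring.
  apply Rmult_le_compat; try lra.
  apply Rlt_le, Rinv_0_lt_compat; lra.
  rewrite <- Rinv_1. apply Rinv_le_contravar; lra.
Qed.

Lemma ex_geom_scal : forall K q, 0 <= q < 1 -> ex_series (fun n => K * q ^ n).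
Proof.
  intros K q Hq. exists (K * / (1 - q)).
  replace (K * / (1 - q)) with (/ (1 - q) * K) by ring.
  assert (H : is_series (fun n => q ^ n * K) (/ (1 - q) * K)).
  { apply is_series_scal_r. apply is_series_geom. rewrite Rabs_pos_eq; lra. }
  revert H. apply is_series_ext. intros; simpl; ring.
Qed.

Lemma ex_P : forall z w, Cmod z < 1 -> Cmod w < 1 / 4 ->
  @ex_series C_AbsRing C_NormedModule (fun n => (Ppoly n z * Cpow w n)%C).
Proof.
  intros z w Hz Hw.
  apply (@ex_series_le C_AbsRing C_CompleteNormedModule _
          (fun n => 4 / (1 - Cmod z) * (4 * Cmod w) ^ n)).
  - intro n. change (Cmod (Ppoly n z * Cpow w n) <= 4 / (1 - Cmod z) * (4 * Cmod w) ^ n).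
    rewrite Cmod_mult, Cmod_pow.
    pose proof (Ppoly_bound n z Hz). pose proof (Cmod_ge_0 w).
    replace (4 / (1 - Cmod z) * (4 * Cmod w) ^ n) with (4 ^ S n / (1 - Cmod z) * Cmod w ^ n).
    apply Rmult_le_compat_r. apply pow_le; lra. exact H.
    rewrite Rpow_mult_distr. simpl. field. lra.
  - apply ex_geom_scal. pose proof (Cmod_ge_0 w). lra.
Qed.

Lemma ex_cat : forall w, Cmod w < 1 / 4 ->
  @ex_series C_AbsRing C_NormedModule (fun n => (RtoC (catalan n) * Cpow w n)%C).
Proof.
  intros w Hw.
  apply (@ex_series_le C_AbsRing C_CompleteNormedModule _
          (fun n => 1 * (4 * Cmod w) ^ n)).
  - intro n. change (Cmod (RtoC (catalan n) * Cpow w n) <= 1 * (4 * Cmod w) ^ n).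
    rewrite Cmod_mult, Cmod_pow, Cmod_R.
    pose proof (catalan_bound n). pose proof (Cmod_ge_0 w).
    rewrite Rabs_pos_eq by lra. rewrite Rpow_mult_distr, Rmult_1_l.
    apply Rmult_le_compat_r. apply pow_le; lra. lra.
  - apply ex_geom_scal. pose proof (Cmod_ge_0 w). lra.
Qed.

Lemma series_shift : forall (a : nat -> C) (l : C),
  @is_series C_AbsRing C_NormedModule a l ->
  @is_series C_AbsRing C_NormedModule (fun n => a (S n)) (l - a 0%nat)%C.
Proof.
  intros a l H. apply is_series_incr_1.
  match goal with |- is_series _ ?x => replace x with l end. exact H.
  change (l = (l - a 0%nat) + a 0%nat)%C. ring.
Qed.

Lemma series_scal : forall (c : C) (a : nat -> C) (l : C),
  @is_series C_AbsRing C_NormedModule a l ->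
  @is_series C_AbsRing C_NormedModule (fun n => c * a n)%C (c * l)%C.
Proof.
  intros c a l H. exact (@is_series_scal C_AbsRing C_NormedModule c a l H).
Qed.

Lemma series_minus : forall (a b : nat -> C) (la lb : C),
  @is_series C_AbsRing C_NormedModule a la ->
  @is_series C_AbsRing C_NormedModule b lb ->
  @is_series C_AbsRing C_NormedModule (fun n => a n - b n)%C (la - lb)%C.
Proof.
  intros a b la lb Ha Hb. exact (@is_series_minus C_AbsRing C_NormedModule a b la lb Ha Hb).
Qed.

Lemma series_uniq : forall (a : nat -> C) (l1 l2 : C),
  @is_series C_AbsRing C_NormedModule a l1 ->
  @is_series C_AbsRing C_NormedModule a l2 -> l1 = l2.
Proof.
  intros a l1 l2 H1 H2. exact (filterlim_locally_unique (sum_n a) l1 l2 H1 H2).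
Qed.

Lemma catGF_eq : forall w L,
  @is_series C_AbsRing C_NormedModule (fun n => (RtoC (catalan n) * Cpow w n)%C) L ->
  catGF w = L.
Proof.
  intros w L HL. unfold catGF.
  apply (@iota_unique C_AbsRing C_CompleteNormedModule
    (fun l : C => @is_series C_AbsRing C_NormedModule (fun n => (RtoC (catalan n) * Cpow w n)%C) l) L).
  - intros y Hy. exact (series_uniq _ _ _ Hy HL).
  - exact HL.
Qed.

Lemma Ppoly0 : forall z, Ppoly 0 z = 1%C.
Proof.
  intros. unfold Ppoly. rewrite sum_O. rewrite (Btri_nn 0). simpl. ring.
Qed.

Lemma catalan0 : catalan 0 = 1.
Proof. unfold catalan. simpl. field. Qed.

Theorem theorem2p7 (z w : C) :
  Cmod z < 1 -> Cmod w < 1 / 4 ->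
  (w * (1 + z) ^ 2)%C <> z ->
  is_series (fun n => (Ppoly n z * Cpow w n)%C)
    ((catGF w - (z + 1)) / (w * (1 + z) ^ 2 - z))%C /\
  is_series (fun n => (Qpoly n z * Cpow w n)%C)
    ((catGF w - (z + 1)) * (z + 1) / (w * (1 + z) ^ 2 - z))%C /\
  ((catGF w - (z + 1)) * (z + 1) / (w * (1 + z) ^ 2 - z))%C =
    ((catGF w - (z + 1)) / (w * (1 + z) ^ 2 - z) * (z + 1))%C.
Proof.
  intros Hz Hw HD.
  assert (HD' : (w * (1 + z) ^ 2 - z)%C <> 0%C).
  { intro E. apply HD. replace (w * (1 + z) ^ 2)%C with ((w * (1 + z) ^ 2 - z) + z)%C by ring.
    rewrite E. ring. }
  assert (HPs : exists S : C, @is_series C_AbsRing C_NormedModule (fun n => (Ppoly n z * Cpow w n)%C) S)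
    by (destruct (ex_P z w Hz Hw) as [S0 H0]; exists S0; exact H0).
  assert (HLs : exists L : C, @is_series C_AbsRing C_NormedModule (fun n => (RtoC (catalan n) * Cpow w n)%C) L)
    by (destruct (ex_cat w Hw) as [S0 H0]; exists S0; exact H0).
  destruct HPs as [S HS]. destruct HLs as [L HL].
  rewrite (catGF_eq w L HL).
  assert (E : (z * (S - 1) = (1 + z) ^ 2 * w * S - (L - 1))%C).
  { pose proof (series_scal z _ _ (series_shift _ _ HS)) as H1.
    pose proof (series_minus _ _ _ _ (series_scal ((1 + z) ^ 2 * w)%C _ _ HS)
                  (series_shift _ _ HL)) as H2.
    simpl in H1, H2. rewrite Ppoly0, catalan0 in *.
    replace (S - 1 * 1)%C with (S - 1)%C in H1 by ring.
    replace (L - RtoC 1 * 1)%C with (L - 1)%C in H2 by ring.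
    apply (series_uniq _ _ _ H1). revert H2. apply is_series_ext.
    intros n. simpl.
    replace (z * (Ppoly (Datatypes.S n) z * (w * w ^ n)))%C with
      ((z * Ppoly (Datatypes.S n) z) * (w * w ^ n))%C by ring.
    rewrite P_rec. ring. }
  assert (ES : S = ((L - (z + 1)) / (w * (1 + z) ^ 2 - z))%C).
  { assert (H : (S * (w * (1 + z) ^ 2 - z) = L - (z + 1))%C).
    { replace (L - (z + 1))%C with
        (S * (w * (1 + z) ^ 2 - z) - (((1 + z) ^ 2 * w * S - (L - 1)) - z * (S - 1)))%C by ring.
      rewrite <- E. ring. }
    rewrite <- H. field. exact HD'. }
  rewrite <- ES.
  assert (EQ : ((L - (z + 1)) * (z + 1) / (w * (1 + z) ^ 2 - z))%C = ((1 + z) * S)%C).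
  { rewrite ES. field. exact HD'. }
  split; [exact HS|]. split.
  - rewrite EQ. pose proof (series_scal (1 + z)%C _ _ HS) as H. revert H.
    apply is_series_ext. intros n. rewrite Q_rel.
    change (((1 + z) * (Ppoly n z * w ^ n))%C = ((1 + z) * Ppoly n z * w ^ n)%C). ring.
  - rewrite EQ. ring.
Qed.
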